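(* Let $\mathcal{X}$ be the class of finite groups $G$ in which independence and strong independence coincide, i.e. in which a finite subset $A\subseteq G$ is independent if and only if it is strongly independent. Then $\mathcal{X}$ is closed under taking subgroups, and every group in $\mathcal{X}$ is an EPPO group.
   Context: A subset $A$ of a group $G$ is \emph{independent} if $a\notin\langle A\setminus\{a\}\rangle$ for every $a\in A$. A finite subset $A$ is \emph{strongly independent} if no subgroup of $G$ containing $A$ can be generated by fewer than $|A|$ elements. An \emph{EPPO group} is a group in which every element has prime power order. *)

(* Defs.v *)
From mathcomp Require Import all_boot all_fingroup.
Set Implicit Arguments. Unset Strict Implicit. Unset Printing Implicit Defensive.
Local Open Scope group_scope.

Definition independent (gT : finGroupType) (A : {set gT}) : Prop :=
  forall a, a \in A -> a \notin <<A :\ a>>.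

Definition strongly_independent (gT : finGroupType) (G : {group gT})
    (A : {set gT}) : Prop :=
  forall (H : {group gT}), H \subset G -> A \subset H ->
  forall B : {set gT}, <<B>> = H -> #|A| <= #|B|.

Definition classX (gT : finGroupType) (G : {group gT}) : Prop :=
  forall A : {set gT}, A \subset G ->
    (independent A <-> strongly_independent G A).

(* EPPO: every element has prime power order (order 1 = p^0 included). *)
Definition EPPO (gT : finGroupType) (G : {group gT}) : Prop :=
  forall x, x \in G -> exists p k, prime p /\ #[x] = (p ^ k)%N.

(* Main.v *)
Require Import Defs.
From mathcomp Require Import all_boot all_fingroup.
From mathcomp Require Import pgroup.
Local Open Scope group_scope.

Lemma elt_in_cycle (gT : finGroupType) (pi : nat_pred) (y z : gT) :
  pi.-elt y -> pi^'.-elt z -> y \in <[z]> -> y = 1.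
Proof.
move=> py pz yz.
have py' : pi^'.-elt y := mem_p_elt pz yz.
by apply/eqP; rewrite -order_eq1; apply/eqP; exact: pnat_1 py py'.
Qed.

Lemma strong_indep (gT : finGroupType) (G : {group gT}) (A : {set gT}) :
  strongly_independent G A -> A \subset G -> independent A.
Proof.
move=> sA AG a aA; apply/negP => ain.
have AB : A \subset <<A :\ a>>.
  apply/subsetP => b bA; case: (eqVneq b a) => [->|ba] //.
  by apply: mem_gen; rewrite !inE ba.
have := sA <<A :\ a>>%G.
have sub : <<A :\ a>> \subset G by rewrite gen_subG; apply: subset_trans AG; apply: subsetDl.
move=> /(_ sub AB (A :\ a) erefl).
by rewrite (cardsD1 a A) aA ltnn.
Qed.

Theorem mainTheorem3 :
  (forall (gT : finGroupType) (G H : {group gT}),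
     classX G -> H \subset G -> classX H) /\
  (forall (gT : finGroupType) (G : {group gT}), classX G -> EPPO G).
Proof.
split.
  move=> gT G H cG HG A AH; split.
    move=> iA K KH AK B BK.
    have AG : A \subset G := subset_trans AH HG.
    exact: ((cG A AG).1 iA) K (subset_trans KH HG) AK B BK.
  by move=> sA; exact: strong_indep sA AH.
move=> gT G cG x xG.
set p := pdiv #[x].
have [px | npx] := boolP (p.-elt x).
  case: (p_natP px) => k hk.
  have [o1 | o1] := leqP #[x] 1.
    exists 2%N, 0%N; split => //; apply/eqP; rewrite eqn_leq o1 /=.
    exact: order_gt0.
  by exists p, k; split => //; apply: pdiv_prime.
exfalso.
have o1 : 1 < #[x].
  rewrite ltnNge; apply/negP => h; move: npx; rewrite /p_elt.
  have -> : #[x] = 1%N by apply/eqP; rewrite eqn_leq h order_gt0.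
  by [].
set y := x.`_p; set z := x.`_p^'.
have y1 : y != 1.
  apply/eqP => /constt1P h.
  have := pnatPpi h (p := p); rewrite /p pi_pdiv o1 => /(_ isT).
  by rewrite /p inE /= inE eqxx.
have z1 : z != 1.
  by apply/eqP => /constt1P; rewrite /p_elt pnatNK; apply/negP.
have py : p.-elt y by exact: p_elt_constt.
have pz : p^'.-elt z by exact: p_elt_constt.
have yz : y \notin <[z]>.
  by apply/negP => h; move/eqP: y1; apply; exact: elt_in_cycle py pz h.
have zy : z \notin <[y]>.
  apply/negP => h; move/eqP: z1; apply; apply: (@elt_in_cycle _ p^' _ _ pz _ h).
  by rewrite /p_elt pnatNK.
have neq : y != z by apply: contraNneq yz => ->; exact: cycle_id.
have AG : [set y; z] \subset G.
  have xG' : <[x]> \subset G by rewrite cycle_subG.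
  by apply/subsetP => w; rewrite !inE => /orP [] /eqP ->; apply: (subsetP xG'); exact: cycle_constt.
have neq' : z != y by rewrite eq_sym.
have iA : independent [set y; z].
  move=> a; rewrite !inE => /orP [] /eqP ->.
    have -> : [set y; z] :\ y = [set z].
      apply/setP => w; rewrite !inE; case: (eqVneq w y) => [->|] /=;
      by rewrite ?(negbTE neq) ?(negbTE neq') ?orbF.
    exact: yz.
  have -> : [set y; z] :\ z = [set y].
    apply/setP => w; rewrite !inE; case: (eqVneq w z) => [->|] /=;
    by rewrite ?(negbTE neq) ?(negbTE neq') ?orbF ?andbT.
  exact: zy.
have := (cG _ AG).1 iA <[x]>%G.
rewrite cycle_subG xG => /(_ isT).
have sub : [set y; z] \subset <[x]>.
  by apply/subsetP => w; rewrite !inE => /orP [] /eqP ->; exact: cycle_constt.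
move=> /(_ sub [set x] erefl).
by rewrite cards2 neq cards1.
Qed.
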